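(* Let $D$ be a strongly connected tournament and let $S$ be a minimum feedback arc set of $D$ such that the subdigraph $D_S$ arc-induced by $S$ is a directed path. Let $m=|S|$ and $k\ge 2$. Then $D$ is $k$-AW if and only if $\gcd(k,F_{m+2})=1$.
   Context: A tournament is a digraph in which for every pair of distinct vertices $v,w$ exactly one of $vw$, $wv$ is an arc. Strongly connected: for any two vertices there are directed walks in both directions. For an ordering $\sigma=v_1,\dots,v_n$ of $V(D)$, the feedback arc set with respect to $\sigma$ is the set of arcs $v_jv_i\in A(D)$ with $i<j$; a feedback arc set is one with respect to some ordering; a minimum feedback arc set is one of minimum cardinality over all orderings. For $B\subseteq A(D)$, the arc-induced subdigraph $D_B$ has arc set $B$ and vertex set the vertices incident with arcs of $B$. A directed path is a digraph whose vertices can be ordered $u_1,\dots,u_p$ so that its arc set is exactly $\{u_iu_{i+1}:1\le i\le p-1\}$. Fibonacci numbers: $F_0=0,F_1=1,F_j=F_{j-1}+F_{j-2}$. The $k$-lights out game: start with a labeling $V(D)\to\mathbb{Z}_k$; toggling $v$ increases by $1$ mod $k$ the label of $v$ and of every $w$ with $vw\in A(D)$; the game is won when all labels are $0$. $D$ is $k$-AW if every labeling $V(D)\to\mathbb{Z}_k$ can be brought to the all-zero labeling by toggling. *)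

(* Defs.v *)
From mathcomp Require Import all_boot all_algebra.
Set Implicit Arguments. Unset Strict Implicit. Unset Printing Implicit Defensive.
Import GRing.Theory.

Definition tournament (V : finType) (a : rel V) : Prop :=
  (forall v, ~~ a v v) /\
  (forall v w, v != w -> (a v w && ~~ a w v) || (a w v && ~~ a v w)).

Definition strongly_connected (V : finType) (a : rel V) : Prop :=
  forall v w, connect a v w.

Definition ordering (V : finType) (s : seq V) : Prop := perm_eq s (enum V).

Definition fas_wrt (V : finType) (a : rel V) (s : seq V) : {set V * V} :=
  [set e | a e.1 e.2 && (index e.2 s < index e.1 s)].

Definition feedback_arc_set (V : finType) (a : rel V) (S : {set V * V}) : Prop :=
  exists s, ordering s /\ S = fas_wrt a s.

Definition min_feedback_arc_set (V : finType) (a : rel V) (S : {set V * V}) : Prop :=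
  feedback_arc_set a S /\
  forall s, ordering s -> #|S| <= #|fas_wrt a s|.

Definition arc_induced_vertices (V : finType) (B : {set V * V}) : {set V} :=
  [set x | [exists e in B, (e.1 == x) || (e.2 == x)]].

Definition arc_induced_is_dipath (V : finType) (B : {set V * V}) : Prop :=
  exists p : seq V,
    [/\ uniq p,
        arc_induced_vertices B = [set x in p] &
        forall e : V * V,
          e \in B <-> exists2 i, i.+1 < size p &
                        e = (nth e.1 p i, nth e.1 p i.+1)].

Fixpoint fib (n : nat) : nat :=
  match n with
  | 0 => 0
  | 1 => 1
  | (m.+1 as n').+1 => fib n' + fib m
  end.

(* k-lights out game. *)
Definition toggle (V : finType) (a : rel V) (k : nat)
    (l : V -> 'Z_k) (v : V) : V -> 'Z_k :=
  fun w => (if (w == v) || a v w then l w + 1 else l w)%R.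

Definition toggles (V : finType) (a : rel V) (k : nat)
    (l : V -> 'Z_k) (s : seq V) : V -> 'Z_k :=
  foldl (toggle a (k:=k)) l s.

Definition k_AW (V : finType) (a : rel V) (k : nat) : Prop :=
  forall l : V -> 'Z_k, exists s : seq V, forall w, toggles a l s w = 0%R.

(* Main.v *)
Require Import Defs.
From mathcomp Require Import all_boot all_algebra.
From mathcomp Require Import zify.
Set Implicit Arguments. Unset Strict Implicit. Unset Printing Implicit Defensive.
Import GRing.Theory.

Local Open Scope ring_scope.

Definition Tm (V : finType) (a : rel V) (R : nmodType) (x : V -> R) (w : V) : R :=
  \sum_v (if (w == v) || a v w then x v else 0).

Lemma toggles_eq (V : finType) (a : rel V) (k : nat) (l : V -> 'Z_k) s w :
  toggles a l s w = l w + (count (fun v => (w == v) || a v w) s)%:R.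
Proof.
elim: s l => [|v s IH] l; first by rewrite /= addr0.
rewrite /toggles /= -/(toggles _ _ _) IH /toggle /=.
by case: ifP => _; rewrite ?add0n ?add1n ?mulrS ?addrA // addrC.
Qed.

Lemma count_sum (V : finType) (R : pzSemiRingType) (P : pred V) (s : seq V) :
  (count P s)%:R = \sum_v (if P v then (count_mem v s)%:R else 0 : R).
Proof.
elim: s => [|u s IH] /=.
  by rewrite big1 // => v _; case: ifP.
rewrite natrD IH (bigD1 u) //= (bigD1 u (P := predT)) //= eqxx addrA.
congr (_ + _).
  by case: (P u) => /=; rewrite ?natrD ?addr0.
apply: eq_bigr => v /negPf vu; case: (P v) => //=.
by rewrite eq_sym vu add0n.
Qed.

Lemma TmB (V : finType) (a : rel V) (R : zmodType) (x y : V -> R) w :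
  Tm a (fun v => x v - y v) w = Tm a x w - Tm a y w.
Proof. by rewrite /Tm -sumrB; apply: eq_bigr => v _; case: ifP; rewrite ?subr0. Qed.

Lemma Tm0 (V : finType) (a : rel V) (R : zmodType) w :
  Tm a (fun _ => 0 : R) w = 0.
Proof. by rewrite /Tm big1 // => v _; case: ifP. Qed.

Lemma Tm_ext (V : finType) (a : rel V) (R : zmodType) (x y : V -> R) w :
  x =1 y -> Tm a x w = Tm a y w.
Proof. by move=> e; apply: eq_bigr => v _; rewrite e. Qed.

Lemma count_flat (V : finType) (f : V -> nat) v :
  count_mem v (flatten [seq nseq (f u) u | u <- enum V]) = f v.
Proof.
rewrite count_flatten -map_comp sumnE big_map big_enum /= (bigD1 v) //=.
rewrite count_nseq /= eqxx mul1n big1 ?addn0 // => u /negPf uv.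
by rewrite /= count_nseq /= uv.
Qed.

Lemma kAW_iff (V : finType) (a : rel V) (k' : nat) :
  k_AW a k'.+2 <->
  (forall x : V -> 'Z_(k'.+2), (forall w, Tm a x w = 0) -> forall w, x w = 0).
Proof.
pose Tf (x : {ffun V -> 'Z_(k'.+2)}) : {ffun V -> 'Z_(k'.+2)} := [ffun w => Tm a x w].
split.
- move=> H.
  have surj : forall y, exists x, Tf x == y.
    move=> y; have [s Hs] := H (fun w => - y w).
    exists [ffun v => (count_mem v s)%:R]; apply/eqP/ffunP => w; rewrite ffunE.
    have := Hs w; rewrite toggles_eq count_sum => /eqP; rewrite addrC subr_eq0 => /eqP <-.
    by apply: eq_bigr => v _; rewrite ffunE.
  pose g y := xchoose (surj y).
  have gK : cancel g Tf by move=> y; apply/eqP; exact: xchooseP (surj y).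
  have [h gh hg] := injF_bij (can_inj gK).
  have Tinj : injective Tf.
    move=> x1 x2 e; rewrite -(hg x1) -(hg x2); congr g.
    by rewrite -[h x1]gK -[h x2]gK hg hg.
  move=> x Hx w.
  have : Tf [ffun v => x v] = Tf [ffun v => 0].
    apply/ffunP => u; rewrite !ffunE (@Tm_ext _ _ _ _ x); last by move=> v; rewrite ffunE.
    rewrite Hx (@Tm_ext _ _ _ _ (fun _ => 0)); first by rewrite Tm0.
    by move=> v; rewrite ffunE.
  by move/Tinj/ffunP/(_ w); rewrite !ffunE.
- move=> K l.
  have Tinj : injective Tf.
    move=> x1 x2 /ffunP e; apply/ffunP => w; apply/eqP; rewrite -subr_eq0; apply/eqP.
    apply: (K (fun v => x1 v - x2 v)) => u.
    by rewrite TmB; have := e u; rewrite !ffunE => ->; rewrite subrr.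
  have [g gT Tg] := injF_bij Tinj.
  pose X := g [ffun w => - l w].
  exists (flatten [seq nseq (X u : nat) u | u <- enum V]) => w.
  rewrite toggles_eq count_sum.
  have -> : \sum_v (if (w == v) || a v w then (count_mem v (flatten [seq nseq (X u : nat) u | u <- enum V]))%:R else 0 : 'Z_(k'.+2)) = Tf X w.
    rewrite ffunE; apply: eq_bigr => v _; rewrite count_flat; case: ifP => // _.
    exact: natr_Zp.
  by rewrite Tg ffunE subrr.
Qed.

Lemma reg_coprime (k' F : nat) :
  (forall c : 'Z_(k'.+2), F%:R * c = 0 -> c = 0) <-> coprime k'.+2 F.
Proof.
split.
- move=> H; set k := k'.+2; set g := gcdn k F.
  have g0 : (0 < g)%N by rewrite gcdn_gt0.
  have gk : (g %| k)%N by exact: dvdn_gcdl.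
  have gF : (g %| F)%N by exact: dvdn_gcdr.
  have c0 : ((k %/ g)%:R : 'Z_(k'.+2)) = 0.
    apply: H; rewrite -natrM.
    have -> : (F * (k %/ g) = (F %/ g) * k)%N.
      by rewrite -{1}(divnK gF) -mulnA [(g * _)%N]mulnC divnK.
    by rewrite natrM (@pchar_Zp k) // mulr0.
  move: c0 => /(congr1 (@nat_of_ord _)).
  rewrite val_Zp_nat // => /eqP; rewrite -/k => /dvdn_leq.
  have kg0 : (0 < k %/ g)%N by rewrite divn_gt0 // dvdn_leq.
  move=> /(_ kg0) le; rewrite /coprime -/g eqn_leq g0 andbT.
  have := leq_mul le (leqnn g); rewrite divnK // -{2}[k]muln1 leq_mul2l /=.
  by [].
- move=> cop c; rewrite -(unitZpE F (isT : (1 < k'.+2)%N)) in cop.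
  by move=> e; rewrite -[c](mulKr cop) e mulr0.
Qed.



Definition Pf (V : finType) (s : seq V) (R : nmodType) (x : V -> R) (w : V) : R :=
  \sum_v (if (index v s <= index w s)%N then x v else 0).
Definition Out (V : finType) (S : {set V * V}) (R : nmodType) (x : V -> R) (w : V) : R :=
  \sum_v (if (w, v) \in S then x v else 0).
Definition In (V : finType) (S : {set V * V}) (R : nmodType) (x : V -> R) (w : V) : R :=
  \sum_v (if (v, w) \in S then x v else 0).

Lemma idx_inj (T : eqType) (s : seq T) x y :
  x \in s -> y \in s -> index x s = index y s -> x = y.
Proof. by move=> xs ys e; rewrite -(nth_index x xs) e nth_index. Qed.

Lemma decomp (V : finType) (a : rel V) (s : seq V) (R : zmodType) (x : V -> R) w :
  tournament a -> (forall v, v \in s) ->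
  Tm a x w = Pf s x w - Out (fas_wrt a s) x w + In (fas_wrt a s) x w.
Proof.
move=> [irr tour] alls.
rewrite /Tm /Pf /Out /In -sumrB -big_split /=; apply: eq_bigr => v _.
rewrite !inE /=.
case: (eqVneq w v) => [->|ne].
  by rewrite (negPf (irr v)) leqnn /= subr0 addr0.
have pne : index v s != index w s.
  by apply/eqP => /(idx_inj (alls v) (alls w)) e; rewrite e eqxx in ne.
have := tour v w; rewrite eq_sym ne => /(_ isT).
case: (ltngtP (index v s) (index w s)) => h; last by rewrite h eqxx in pne.
- by case: (a v w); case: (a w v); rewrite //= ?subrr ?subr0 ?addr0.
- by case: (a v w); case: (a w v); rewrite //= ?subrr ?subr0 ?addr0 ?add0r.
Qed.



Definition pathS (V : finType) (S : {set V * V}) (p : seq V) :=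
  forall e : V * V,
    e \in S <-> exists2 i, (i.+1 < size p)%N & e = (nth e.1 p i, nth e.1 p i.+1).

Lemma inS_path (V : finType) (S : {set V * V}) p d t :
  pathS S p -> (t.+1 < size p)%N -> (nth d p t, nth d p t.+1) \in S.
Proof.
move=> HS ht; apply/HS; exists t => //=.
by congr pair; apply: set_nth_default => //; exact: ltnW.
Qed.

Lemma S_path (V : finType) (S : {set V * V}) p d u v :
  pathS S p -> (u, v) \in S ->
  exists2 i, (i.+1 < size p)%N & u = nth d p i /\ v = nth d p i.+1.
Proof.
move=> HS /HS [i hi [e1 e2]]; exists i => //.
split; [rewrite e1 | rewrite e2]; apply: set_nth_default => //; exact: ltnW.
Qed.

Lemma Out_path (V : finType) (S : {set V * V}) p (R : zmodType) (x : V -> R) d t :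
  pathS S p -> uniq p -> (t < size p)%N ->
  Out S x (nth d p t) = if (t.+1 < size p)%N then x (nth d p t.+1) else 0.
Proof.
move=> HS up ht; rewrite /Out; case: ifP => h.
  rewrite (bigD1 (nth d p t.+1)) //= inS_path // big1 ?addr0 // => v vne.
  case: ifP => // /(S_path d HS) [i hi [e1 e2]].
  move/eqP: e1; rewrite nth_uniq // ?(ltnW hi) // => /eqP ti.
  by rewrite e2 -ti eqxx in vne.
apply: big1 => v _; case: ifP => // /(S_path d HS) [i hi [e1 e2]].
move/eqP: e1; rewrite nth_uniq // ?(ltnW hi) // => /eqP ti.
by rewrite ti hi in h.
Qed.

Lemma In_path (V : finType) (S : {set V * V}) p (R : zmodType) (x : V -> R) d t :
  pathS S p -> uniq p -> (t < size p)%N ->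
  In S x (nth d p t) = if (0 < t)%N then x (nth d p t.-1) else 0.
Proof.
move=> HS up ht; rewrite /In; case: ifP => h.
  have ht' : (t.-1.+1 < size p)%N by rewrite prednK.
  rewrite (bigD1 (nth d p t.-1)) //=.
  have := inS_path d HS ht'; rewrite prednK // => -> /=.
  rewrite big1 ?addr0 // => v vne.
  case: ifP => // /(S_path d HS) [i hi [e1 e2]].
  move/eqP: e2; rewrite nth_uniq // => /eqP ti.
  by rewrite e1 ti /= eqxx in vne.
apply: big1 => v _; case: ifP => // /(S_path d HS) [i hi [e1 e2]].
move/eqP: e2; rewrite nth_uniq // => /eqP ti.
by rewrite ti in h.
Qed.

Lemma Out_off (V : finType) (S : {set V * V}) p (R : zmodType) (x : V -> R) w :
  pathS S p -> w \notin p -> Out S x w = 0.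
Proof.
move=> HS wp; apply: big1 => v _; case: ifP => // /(S_path w HS) [i hi [e1 _]].
by rewrite e1 mem_nth ?(ltnW hi) in wp.
Qed.

Lemma In_off (V : finType) (S : {set V * V}) p (R : zmodType) (x : V -> R) w :
  pathS S p -> w \notin p -> In S x w = 0.
Proof.
move=> HS wp; apply: big1 => v _; case: ifP => // /(S_path w HS) [i hi [_ e2]].
by rewrite e2 mem_nth ?hi in wp.
Qed.

Lemma card_pathS (V : finType) (S : {set V * V}) p :
  pathS S p -> uniq p -> #|S| = (size p).-1.
Proof.
move=> HS up; case: p HS up => [|d p'] HS up.
  apply/eqP; rewrite cards_eq0; apply/eqP/setP => e; rewrite inE.
  by apply/idP => /HS [].
set p := d :: p'.
have -> : S = [set (nth d p i, nth d p i.+1) | i : 'I_(size p).-1].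
  apply/setP => [[u v]]; apply/idP/imsetP.
    move=> /(S_path d HS) [i hi [-> ->]].
    by exists (Ordinal (hi : (i < (size p).-1)%N)).
  move=> [i _ ->]; apply: inS_path => //.
  by have := ltn_ord i; rewrite /= ltnS.
rewrite card_imset ?card_ord // => i j [/eqP e _]; apply: ord_inj.
have hi : (i < size p)%N by have := ltn_ord i; rewrite /= => /leqW.
have hj : (j < size p)%N by have := ltn_ord j; rewrite /= => /leqW.
by move: e; rewrite nth_uniq // => /eqP.
Qed.

Local Close Scope ring_scope.



Definition sw (T : eqType) (v w z : T) := if z == v then w else if z == w then v else z.

Lemma swK (T : eqType) (v w : T) : involutive (sw v w).
Proof.
move=> z; rewrite /sw.
case: (eqVneq z v) => [->|zv]; first by rewrite eqxx; case: eqVneq.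
case: (eqVneq z w) => [->|zw]; first by rewrite eqxx.
by rewrite (negPf zv) (negPf zw).
Qed.

Lemma gap (V : finType) (a : rel V) (s : seq V) (S : {set V * V}) v w :
  tournament a -> perm_eq s (enum V) -> S = fas_wrt a s ->
  (forall s', perm_eq s' (enum V) -> #|S| <= #|fas_wrt a s'|) ->
  (v, w) \in S -> (index w s).+1 < index v s.
Proof.
move=> [irr tour] Hs HS Hmin vwS.
have alls : forall z, z \in s by move=> z; rewrite (perm_mem Hs) mem_enum.
have us : uniq s by rewrite (perm_uniq Hs) enum_uniq.
have := vwS; rewrite HS inE /= => /andP [avw lt].
rewrite ltn_neqAle lt andbT; apply/negP => /eqP ev.
have vw : v != w by apply: contraNneq (irr v) => e; rewrite {2}e.
pose s' := map (sw v w) s.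
have swi : injective (sw v w) := can_inj (swK v w).
have Hs' : perm_eq s' (enum V).
  apply: uniq_perm; rewrite ?enum_uniq ?map_inj_uniq // => z.
  rewrite mem_enum; apply/mapP; exists (sw v w z) => //; by rewrite swK.
have ix : forall z, index z s' = index (sw v w z) s.
  by move=> z; rewrite -{1}(swK v w z) index_map.
have iz : forall z, z != v -> z != w -> index z s != index w s /\ index z s != index v s.
  move=> z zv zw; split; apply/eqP => /(idx_inj (alls _) (alls _)) e.
    by rewrite e eqxx in zw.
  by rewrite e eqxx in zv.
have sub : fas_wrt a s' \subset S :\ (v, w).
  apply/subsetP => [[x y]]; rewrite !inE /= !ix HS !inE /=.
  have nwv : ~~ a w v.
    by have := tour v w vw; rewrite avw /= andbF orbF.
  have isv : index (sw v w v) s = index w s by rewrite /sw eqxx.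
  have isw : index (sw v w w) s = index v s by rewrite /sw; case: eqVneq => [->|]; rewrite ?eqxx.
  have isz : forall z, z != v -> z != w -> index (sw v w z) s = index z s.
    by move=> z zv zw; rewrite /sw (negPf zv) (negPf zw).
  case: (eqVneq x v) => [->|xv]; [|case: (eqVneq x w) => [->|xw]];
  (case: (eqVneq y v) => [->|yv]; [|case: (eqVneq y w) => [->|yw]]);
  rewrite ?isv ?isw ?isz // ?(negPf (irr _)) ?(negPf nwv) //= ?xpair_eqE ?eqxx /=
     ?(negPf vw) ?(negPf xv) ?(negPf xw) ?(negPf yv) ?(negPf yw) ?andbF /=;
  case/andP => ax h; rewrite ?ax /=;
  first [ (move: (iz _ xv xw) (iz _ yv yw) => [/eqP hx1 /eqP hx2] [/eqP hy1 /eqP hy2]; clear -h lt ev hx1 hx2 hy1 hy2; lia)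
        | (move: (iz _ xv xw) => [/eqP hx1 /eqP hx2]; clear -h lt ev hx1 hx2; lia)
        | (move: (iz _ yv yw) => [/eqP hy1 /eqP hy2]; clear -h lt ev hy1 hy2; lia)
        | (clear -h lt ev; lia) ].
have := Hmin s' Hs'; rewrite (cardsD1 (v, w) S) vwS /=.
have := subset_leq_card sub => h1 h2; have := leq_trans h2 h1; by rewrite add1n ltnn.
Qed.
Lemma dec_path (V : finType) (S : {set V * V}) p (s : seq V) d :
  pathS S p -> (forall u v, (u, v) \in S -> (index v s).+1 < index u s) ->
  forall r dd, r + dd < size p ->
  index (nth d p (r + dd)) s + 2 * dd <= index (nth d p r) s.
Proof.
move=> HS G r; elim=> [|dd IH] h; first by rewrite addn0 muln0 addn0.
have h1 : r + dd < size p by lia.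
have h2 : (r + dd).+1 < size p by rewrite -addnS.
have := IH h1; have := G _ _ (inS_path d HS h2).
rewrite addnS; lia.
Qed.

Lemma pred_off (V : finType) (S : {set V * V}) p (s : seq V) d d' t :
  pathS S p -> (forall u v, (u, v) \in S -> (index v s).+1 < index u s) ->
  (forall z, z \in s) -> uniq s -> uniq p -> t < size p ->
  0 < index (nth d p t) s -> nth d' s (index (nth d p t) s).-1 \notin p.
Proof.
move=> HS G alls us up ht h0; apply/negP.
set u := nth d' s _ => up'; have e := nth_index d up'.
have ui : index u s = (index (nth d p t) s).-1.
  rewrite /u index_uniq //; have := index_mem (nth d p t) s; rewrite alls; lia.
have [r hr er] : exists2 r, r < size p & u = nth d p r.
  by exists (index u p); [rewrite index_mem | rewrite e].
rewrite er in ui; clear e er up'.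
have {}ui : (index (nth d p r) s).+1 = index (nth d p t) s by rewrite ui prednK.
case: (ltngtP r t) => hrt.
- have h2 : r + (t - r) < size p by rewrite subnKC ?(ltnW hrt).
  have := dec_path d HS G h2; rewrite subnKC ?(ltnW hrt) //; lia.
- have h2 : t + (r - t) < size p by rewrite subnKC; [exact: hr | exact: ltnW hrt].
  have := dec_path d HS G h2; rewrite subnKC; [lia | exact: ltnW hrt].
- by rewrite hrt in ui; lia.
Qed.

Local Open Scope ring_scope.
Arguments fib : simpl never.
Lemma fibSS n : fib n.+2 = (fib n.+1 + fib n)%N. Proof. by []. Qed.

Lemma telescope (V : finType) (s : seq V) (R : zmodType) (x : V -> R) w :
  (forall z, z \in s) -> uniq s ->
  Pf s x w = x w + (if (0 < index w s)%N then Pf s x (nth w s (index w s).-1) else 0).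
Proof.
move=> alls us; rewrite /Pf (bigD1 w) //= leqnn; congr (_ + _).
case: ifP => h0.
  have hs0 := alls w; rewrite -index_mem in hs0.
  move: h0 hs0; case e: (index w s) => [|j] //= _ hs0.
  have hs : (j < size s)%N by lia.
  rewrite index_uniq // [RHS](bigD1 w) //= e ltnn.
  rewrite add0r; apply: eq_bigr => v vw.
  have : index v s != index w s.
    by apply: contra vw => /eqP /(idx_inj (alls v) (alls w)) ->.
  rewrite ?e; by case: ifP; case: ifP => //; lia.
apply: big1 => v vw.
have : index v s != index w s.
  by apply: contra vw => /eqP /(idx_inj (alls v) (alls w)) ->.
by case: ifP => //; lia.
Qed.

Lemma PO_of (V : finType) (a : rel V) (s : seq V) (R : zmodType) (x : V -> R) w :
  tournament a -> (forall z, z \in s) -> Tm a x w = 0 ->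
  Pf s x w = Out (fas_wrt a s) x w - In (fas_wrt a s) x w.
Proof.
move=> tour alls; rewrite (decomp x w tour alls) => /eqP; rewrite addr_eq0 => /eqP e.
by rewrite -(subrK (Out (fas_wrt a s) x w) (Pf s x w)) e addrC.
Qed.

Lemma K1 (V : finType) (a : rel V) (s : seq V) (S : {set V * V}) p (R : pzRingType) :
  tournament a -> (forall z, z \in s) -> uniq s -> S = fas_wrt a s ->
  pathS S p -> uniq p ->
  (forall u v, (u, v) \in S -> ((index v s).+1 < index u s)%N) ->
  (forall c : R, (fib (size p).+1)%:R * c = 0 -> c = 0) ->
  forall x : V -> R, (forall w, Tm a x w = 0) -> forall w, x w = 0.
Proof.
move=> tour alls us HSf HS up G Hc x Tx w0.
have PO : forall w, Pf s x w = Out S x w - In S x w.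
  by move=> w; rewrite HSf; apply: PO_of.
pose d := w0.
pose y t := x (nth d p t).
have Y1 : forall t, (t < size p)%N ->
    y t = (if (t.+1 < size p)%N then y t.+1 else 0) - (if (0 < t)%N then y t.-1 else 0).
  move=> t ht; have := telescope x (nth d p t) alls us.
  case: ifP => h0; rewrite PO (Out_path _ _ HS up ht) (In_path _ _ HS up ht).
    have hp := pred_off (nth d p t) HS G alls us up ht h0.
    rewrite PO (Out_off x HS hp) (In_off x HS hp).
    by rewrite subr0 addr0.
  by rewrite addr0.
have Y2 : forall t, ((t < size p)%N -> y t = (fib t.+1)%:R * y 0) /\
                    ((t.+1 < size p)%N -> y t.+1 = (fib t.+2)%:R * y 0).
  elim=> [|t [IH1 IH]].
    split; first by rewrite mul1r.
    move=> h1; have := Y1 0%N (ltnW h1); rewrite h1 subr0 /= => ->.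
    by rewrite mul1r.
  split; first exact: IH.
  move=> h2; have := Y1 t.+1 (ltnW h2); rewrite h2 /=.
  move/eqP; rewrite eq_sym subr_eq => /eqP ->.
  have h1 : (t.+1 < size p)%N by apply: ltn_trans h2.
  rewrite IH // IH1 ?(ltnW h1) // (fibSS t.+1) natrD mulrDl //.
have Y3 : (0 < size p)%N -> (fib (size p).+1)%:R * y 0 = 0.
  case: (size p) Y1 Y2 => [|[|l]] // Y1' Y2' _.
    by have := Y1' 0%N isT; rewrite /= subr0 => ->; rewrite mulr0.
  have := Y1' l.+1 (leqnn _); rewrite ltnn /= sub0r => /eqP.
  rewrite -addr_eq0 (proj1 (Y2' l.+1)) // (proj1 (Y2' l)) //.
  by rewrite -mulrDl -natrD -fibSS => /eqP.
have y0 : forall t, (t < size p)%N -> y t = 0.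
  move=> t ht; rewrite (proj1 (Y2 t)) //.
  have ht0 : (0 < size p)%N by apply: leq_ltn_trans ht.
  by rewrite (Hc _ (Y3 ht0)) mulr0.
have OI : forall v, Out S x v = 0 /\ In S x v = 0.
  move=> v; case: (boolP (v \in p)) => vp; last by rewrite (Out_off x HS vp) (In_off x HS vp).
  have hv : (index v p < size p)%N by rewrite index_mem.
  rewrite -(nth_index d vp) (Out_path _ _ HS up hv) (In_path _ _ HS up hv).
  split; case: ifP => // h.
    exact: y0.
  by apply: y0; apply: leq_ltn_trans hv; apply: leq_pred.
have P0 : forall v, Pf s x v = 0 by move=> v; rewrite PO; case: (OI v) => -> ->; rewrite subr0.
have := telescope x w0 alls us; rewrite !P0.
by case: ifP; rewrite ?addr0 => _ /esym.
Qed.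

Lemma K2 (V : finType) (a : rel V) (s : seq V) (S : {set V * V}) p (R : pzRingType) :
  tournament a -> (forall z, z \in s) -> uniq s -> S = fas_wrt a s ->
  pathS S p -> uniq p ->
  (forall u v, (u, v) \in S -> ((index v s).+1 < index u s)%N) ->
  (forall x : V -> R, (forall w, Tm a x w = 0) -> forall w, x w = 0) ->
  forall c : R, (fib (size p).+1)%:R * c = 0 -> c = 0.
Proof.
move=> tour alls us HSf HS up G Ker c Fc.
case: p HS up G Fc => [|d p'] HS up G Fc; first by rewrite mul1r in Fc.
case: p' HS up G Fc => [|d2 p''] HS up G Fc; first by rewrite mul1r in Fc.
set p := [:: d, d2 & p''] in HS up Fc *.
have L2 : (1 < size p)%N by [].
pose yv v := if v \in p then (fib (index v p).+1)%:R * c else 0.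
pose Pt v := Out S yv v - In S yv v.
pose x v := Pt v - (if (0 < index v s)%N then Pt (nth v s (index v s).-1) else 0).
have PX : forall w, Pf s x w = Pt w.
  suff : forall n w, index w s = n -> Pf s x w = Pt w by move=> H w; exact: H.
  elim=> [|n IH] w e; rewrite telescope // e /=.
    by rewrite /x e /= !subr0 addr0.
  have hs : (n < size s)%N.
    by move: (alls w); rewrite -index_mem e; apply: ltn_trans.
  rewrite IH ?index_uniq // /x e /=.
  by rewrite subrK.
have yvp : forall j, (j < size p)%N -> yv (nth d p j) = (fib j.+1)%:R * c.
  by move=> j hj; rewrite /yv mem_nth // index_uniq.
have XY : forall v, v \in p -> x v = yv v.
  move=> v vp; have ht : (index v p < size p)%N by rewrite index_mem.
  rewrite -(nth_index d vp); set t := index v p in ht *.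
  rewrite /x; have -> : (if (0 < index (nth d p t) s)%N then
        Pt (nth (nth d p t) s (index (nth d p t) s).-1) else 0) = 0.
    case: ifP => h0 //; have hp := pred_off (nth d p t) HS G alls us up ht h0.
    by rewrite /Pt (Out_off yv HS hp) (In_off yv HS hp) subr0.
  rewrite subr0 /Pt (Out_path _ _ HS up ht) (In_path _ _ HS up ht) (yvp t ht).
  clearbody t; case: t ht => [|t'] ht.
    by rewrite L2 (yvp 1%N L2) /= subr0.
  rewrite /= (yvp t' (ltnW ht)); case: ifP => h.
    by rewrite (yvp t'.+2 h) (fibSS t'.+1) natrD mulrDl addrK.
  have e : size p = t'.+2 by move: ht h; rewrite /p /=; clear; lia.
  move: Fc; rewrite e (fibSS t'.+1) natrD mulrDl => /eqP; rewrite addr_eq0 => /eqP ->.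
  by rewrite sub0r.
have OE : forall w, Out S x w = Out S yv w.
  move=> w; apply: eq_bigr => v _; case: ifP => // /(S_path d HS) [i hi [_ ->]].
  by rewrite XY // mem_nth.
have IE : forall w, In S x w = In S yv w.
  move=> w; apply: eq_bigr => v _; case: ifP => // /(S_path d HS) [i hi [-> _]].
  by rewrite XY // mem_nth // ltnW.
have Tx : forall w, Tm a x w = 0.
  move=> w; rewrite (decomp x w tour alls) -HSf OE IE PX /Pt.
  by rewrite [Out S yv w - _ - _]addrAC subrr sub0r addNr.
have := Ker x Tx d; rewrite XY ?mem_head // /yv mem_head /= eqxx.
by rewrite mul1r.
Qed.

Local Close Scope ring_scope.

Theorem mainTheorem7 (V : finType) (a : rel V) (S : {set V * V}) (k : nat) :
  tournament a -> strongly_connected a ->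
  min_feedback_arc_set a S -> arc_induced_is_dipath S ->
  2 <= k ->
  (k_AW a k <-> coprime k (fib (#|S| + 2))).
Proof.
move=> tour _ [[s [Hs HSf]] Hmin] [p [up _ HS]] hk.
case: k hk => [|[|k']] // _.
have alls : forall z, z \in s by move=> z; rewrite (perm_mem Hs) mem_enum.
have us : uniq s by rewrite (perm_uniq Hs) enum_uniq.
have HS' : pathS S p := HS.
have G : forall u v, (u, v) \in S -> (index v s).+1 < index u s.
  by move=> u v; apply: gap tour Hs HSf Hmin.
have eF : fib (#|S| + 2) = fib (size p).+1.
  rewrite (card_pathS HS' up); case: (size p) => [|l] //=.
  by rewrite addn2.
rewrite kAW_iff eF -reg_coprime; split.
- exact: (K2 tour alls us HSf HS' up G).
- exact: (K1 tour alls us HSf HS' up G).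
Qed.
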